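(* Let $n,k,l$ be nonnegative integers with $k+l\le n$, let $\alpha,\beta>-1$, set $\sigma=\alpha+\beta+1$, and for $h=k,\ldots,n-l$ and $i=k+l,\ldots,n$ define \[ z_{hi}=\binom{n}{h}\frac{(2i+\sigma)(k+l-n)_{i-k-l}(\alpha+2l+1)_{n-l-h}(\beta+2k+1)_{h-k}}{(\alpha+2l+1)_{i-k-l}\,(i+k+l+\sigma)_{n+1-k-l}},\qquad w_{hi}=Q_{i-k-l}(h-k;\,\beta+2k,\,\alpha+2l,\,n-k-l). \] Then for each fixed $i$ (and whenever the indices involved lie in the range $k\le h\le n-l$): \[ z_{ki}=\binom{n}{k}\frac{(2i+\sigma)(\alpha+l+i+1-k)_{n-i}(k+l-n)_{i-k-l}}{(i+k+l+\sigma)_{n-k-l+1}}, \] \[ z_{hi}=\frac{(n+1-h)(\beta+k+h)}{h(\alpha+l+n+1-h)}\,z_{h-1,i}\qquad(h=k+1,\ldots,n-l); \] and \[ w_{ki}=1,\qquad w_{k+1,i}=1+\frac{(i-k-l)(i+k+l+\sigma)}{(\beta+2k+1)(k+l-n)}, \] \[ w_{hi}=T_i(h)\,w_{h-1,i}+V(h)\,w_{h-2,i}\qquad(h=k+2,\ldots,n-l), \] where \[ V(h)=\frac{(h-k-1)(l+n+\alpha+2-h)}{(h+k+\beta)(h+l-n-1)},\qquad T_i(h)=1-V(h)-\frac{(k+l-i)(i+k+l+\sigma)}{(h+k+\beta)(h+l-n-1)}. \]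
   Context: Pochhammer symbol: $(a)_0=1$, $(a)_j=a(a+1)\cdots(a+j-1)$. Hahn polynomials: for a nonnegative integer $N$, $a,b>-1$ and $m=0,1,\ldots,N$, $Q_m(x;a,b,N)=\sum_{j=0}^m\frac{(-m)_j(m+a+b+1)_j(-x)_j}{j!\,(a+1)_j\,(-N)_j}$. (The products $d_{hi}=z_{hi}w_{hi}$ are the coefficients of the Bernstein polynomial $B^n_h(x)=\binom nh x^h(1-x)^{n-h}$ in the basis of modified Jacobi polynomials $J_{i,k,l}^{(\alpha,\beta)}(x)=(1-x)^lx^kR^{(\alpha+2l,\beta+2k)}_{i-k-l}(x)$, $i=k+l,\ldots,n$, with $R^{(a,b)}_m$ the shifted Jacobi polynomials.) *)

(* Defs.v *)
From mathcomp Require Import all_boot all_order all_algebra.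
Set Implicit Arguments. Unset Strict Implicit. Unset Printing Implicit Defensive.
Import Order.TTheory GRing.Theory Num.Theory.
Local Open Scope ring_scope.

Definition poch {R : realFieldType} (a : R) (j : nat) : R :=
  \prod_(0 <= m < j) (a + m%:R).

Definition hahnQ {R : realFieldType} (m : nat) (x a b : R) (N : nat) : R :=
  \sum_(j < m.+1)
     (poch (- m%:R) j * poch (m%:R + a + b + 1) j * poch (- x) j)
     / (j`!%:R * poch (a + 1) j * poch (- N%:R) j).

(* z_{hi}, for h = k..n-l and i = k+l..n (nat subtractions are exact there). *)
Definition zc {R : realFieldType} (al be : R) (n k l h i : nat) : R :=
  let sigma := al + be + 1 in
  'C(n, h)%:R *
  ((2 * i%:R + sigma) * poch ((k + l)%:R - n%:R) (i - k - l)
     * poch (al + 2 * l%:R + 1) (n - l - h) * poch (be + 2 * k%:R + 1) (h - k))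
  / (poch (al + 2 * l%:R + 1) (i - k - l)
     * poch (i%:R + k%:R + l%:R + sigma) (n + 1 - k - l)).

Definition wc {R : realFieldType} (al be : R) (n k l h i : nat) : R :=
  hahnQ (i - k - l) (h - k)%:R (be + 2 * k%:R) (al + 2 * l%:R) (n - k - l).

(* Main.v *)
Require Import Defs.
From mathcomp Require Import all_boot all_order all_algebra.
From mathcomp Require Import ring lra zify.
Import Order.TTheory GRing.Theory Num.Theory.
Local Open Scope ring_scope.


Lemma poch0 {R : realFieldType} (a : R) : poch a 0 = 1.
Proof. by rewrite /poch big_geq. Qed.

Lemma pochS {R : realFieldType} (a : R) j : poch a j.+1 = poch a j * (a + j%:R).
Proof. by rewrite /poch big_nat_recr. Qed.

Lemma poch_add {R : realFieldType} (a : R) p q : poch a (p + q) = poch a p * poch (a + p%:R) q.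
Proof.
elim: q => [|q IH]; first by rewrite addn0 poch0 mulr1.
by rewrite addnS !pochS IH natrD addrA mulrA.
Qed.

Lemma pochSl {R : realFieldType} (a : R) j : poch a j.+1 = a * poch (a + 1) j.
Proof. by rewrite -add1n poch_add /poch big_nat1 addr0. Qed.

Lemma poch_gt0 {R : realFieldType} (a : R) j : 0 < a -> 0 < poch a j.
Proof.
move=> ha; rewrite /poch; apply: prodr_gt0 => t _.
have := ler0n R t; lra.
Qed.

Lemma pochN_neq0 {R : realFieldType} (N j : nat) : (j <= N)%N -> poch (- N%:R) j != 0 :> R.
Proof.
elim: j => [|j IH] hj; first by rewrite poch0 oner_neq0.
rewrite pochS mulf_neq0 ?IH ?(ltnW hj) //.
by rewrite addrC subr_eq0 eqr_nat neq_ltn hj.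
Qed.


Definition cc {R : realFieldType} (m N : nat) (a b : R) j :=
  poch (- m%:R) j * poch (m%:R + a + b + 1) j
  / (j`!%:R * poch (a + 1) j * poch (- N%:R) j).

Lemma hahnQE {R : realFieldType} m (x a b : R) N :
  hahnQ m x a b N = \sum_(0 <= j < m.+1) cc m N a b j * poch (-x) j.
Proof. rewrite /hahnQ big_mkord; apply: eq_bigr => j _; by rewrite /cc [RHS]mulrAC. Qed.

Lemma cc_rec {R : realFieldType} m N (a b : R) j : (m <= N)%N -> (j < m)%N -> -1 < a ->
  cc m N a b j.+1 * ((j%:R + 1) * (j%:R + 1 + a) * (j%:R - N%:R))
  = cc m N a b j * ((j%:R - m%:R) * (j%:R + m%:R + a + b + 1)).
Proof.
move=> hmN hjm ha.
have h1 : poch (- N%:R) j != 0 :> R by apply: pochN_neq0; lia.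
have h2 : poch (a + 1) j != 0 :> R by rewrite gt_eqF // poch_gt0 //; lra.
have h3 : (j`!%:R : R) != 0 by rewrite pnatr_eq0 -lt0n fact_gt0.
have h4 : (j%:R + 1 : R) != 0 by rewrite natr1 pnatr_eq0.
have h5 : (j%:R + 1 + a : R) != 0 by apply: lt0r_neq0; have := ler0n R j; lra.
have h6 : (j%:R - N%:R : R) != 0 by rewrite subr_eq0 eqr_nat neq_ltn; apply/orP; left; lia.
rewrite /cc !pochS factS natrM -natr1.
have h5' : a + 1 + j%:R != 0 by apply: lt0r_neq0; have := ler0n R j; lra.
have h6' : - N%:R + j%:R != 0 :> R by rewrite addrC.
by field; rewrite h1 h2 h3 h4 h5' h6'.
Qed.

Lemma Lf {R : realFieldType} j (x a b : R) (N : nat) :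
  (x + a + 1) * (x - N%:R) * (poch (-(x+1)) j.+1 - poch (-x) j.+1)
  - x * (x - b - N%:R - 1) * (poch (-x) j.+1 - poch (-(x-1)) j.+1)
  = (j%:R + 1) * (j%:R + 1 + a + b + 1) * poch (-x) j.+1
    - (j%:R + 1) * (j%:R + 1 + a) * (j%:R - N%:R) * poch (-x) j.
Proof.
have e1 : poch (-(x+1)) j.+1 = -(x+1) * poch (-x) j.
  by rewrite pochSl (_ : -(x+1)+1 = -x) //; ring.
have e2 : poch (-(x-1)) j.+1 = poch (-x+1) j * (-x+1+j%:R).
  by rewrite pochS (_ : -(x-1) = -x+1) //; ring.
have E : -x * poch (-x+1) j = poch (-x) j * (-x + j%:R) by rewrite -pochS pochSl.
rewrite e1 e2 pochS.
apply/eqP; rewrite -subr_eq0; apply/eqP.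
transitivity (-(x - b - N%:R - 1) * (1 - x + j%:R) * (-x * poch (-x+1) j - poch (-x) j * (-x + j%:R))).
  ring.
by rewrite E subrr mulr0.
Qed.

Lemma hahn_diff {R : realFieldType} m N (a b x : R) : (m <= N)%N -> -1 < a ->
  (x + a + 1) * (x - N%:R) * (hahnQ m (x+1) a b N - hahnQ m x a b N)
  - x * (x - b - N%:R - 1) * (hahnQ m x a b N - hahnQ m (x-1) a b N)
  = m%:R * (m%:R + a + b + 1) * hahnQ m x a b N.
Proof.
move=> hmN ha.
rewrite !hahnQE.
set c := cc m N a b.
set B := (x + a + 1) * (x - N%:R).
set D := x * (x - b - N%:R - 1).
transitivity (\sum_(0 <= j < m.+1) c j * (B * (poch (-(x+1)) j - poch (-x) j)
                 - D * (poch (-x) j - poch (-(x-1)) j))).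
  rewrite -!sumrB !mulr_sumr -sumrB; apply: eq_bigr => j _; ring.
rewrite big_nat_recl // !poch0 !subrr !mulr0 subrr mulr0 add0r.
transitivity (\sum_(0 <= j < m) (c j.+1 * ((j.+1%:R) * (j.+1%:R + a + b + 1)) * poch (-x) j.+1
   - c j * ((j%:R - m%:R) * (j%:R + m%:R + a + b + 1)) * poch (-x) j)).
  apply: eq_big_nat => j /andP [_ hj].
  rewrite /B /D Lf -(@cc_rec R m N a b j hmN hj ha) -natr1 /c; ring.
rewrite sumrB.
transitivity (\sum_(0 <= j < m.+1) c j * (j%:R * (j%:R + a + b + 1)) * poch (-x) j
   - \sum_(0 <= j < m.+1) c j * ((j%:R - m%:R) * (j%:R + m%:R + a + b + 1)) * poch (-x) j).
  by rewrite big_nat_recl // big_nat_recr //= subrr !(mul0r, mulr0) add0r addr0.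
by rewrite -sumrB mulr_sumr; apply: eq_bigr => j _; ring.
Qed.

Lemma poch1 {R : realFieldType} (a : R) : poch a 1 = a.
Proof. by rewrite pochS poch0 mul1r addr0. Qed.

Theorem theorem4 (R : realFieldType) (n k l : nat) (al be : R)
  (hkl : (k + l <= n)%N) (hal : -1 < al) (hbe : -1 < be)
  (i : nat) (hi1 : (k + l <= i)%N) (hi2 : (i <= n)%N) :
  let sigma := al + be + 1 in
  let V := fun h : nat =>
    ((h%:R - k%:R - 1) * (l%:R + n%:R + al + 2 - h%:R))
    / ((h%:R + k%:R + be) * (h%:R + l%:R - n%:R - 1)) in
  let T := fun h : nat =>
    1 - V h - ((k%:R + l%:R - i%:R) * (i%:R + k%:R + l%:R + sigma))
              / ((h%:R + k%:R + be) * (h%:R + l%:R - n%:R - 1)) in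
  [/\ zc al be n k l k i =
        'C(n, k)%:R * ((2 * i%:R + sigma)
          * poch (al + l%:R + i%:R + 1 - k%:R) (n - i)
          * poch ((k + l)%:R - n%:R) (i - k - l))
        / poch (i%:R + k%:R + l%:R + sigma) (n - k - l + 1),
      (forall h : nat, (k + 1 <= h)%N -> (h <= n - l)%N ->
        zc al be n k l h i =
          ((n%:R + 1 - h%:R) * (be + k%:R + h%:R))
          / (h%:R * (al + l%:R + n%:R + 1 - h%:R)) * zc al be n k l h.-1 i),
      wc al be n k l k i = 1,
      ((k + 1 <= n - l)%N ->
        wc al be n k l k.+1 i =
          1 + ((i%:R - k%:R - l%:R) * (i%:R + k%:R + l%:R + sigma))
              / ((be + 2 * k%:R + 1) * ((k + l)%:R - n%:R)))
    & (forall h : nat, (k + 2 <= h)%N -> (h <= n - l)%N ->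
        wc al be n k l h i = T h * wc al be n k l h.-1 i + V h * wc al be n k l h.-2 i)].
Proof.
cbv beta zeta.
have l0 := ler0n R l; have k0 := ler0n R k; have i0 := ler0n R i; have n0 := ler0n R n.
have hPm : poch (al + 2 * l%:R + 1) (i - k - l) != 0.
  by rewrite gt_eqF // poch_gt0 //; lra.
have emR : ((i - k - l)%:R : R) = i%:R - k%:R - l%:R.
  by rewrite -subnDA (natrB _ hi1) natrD; ring.
have eNR : ((n - k - l)%:R : R) = n%:R - k%:R - l%:R.
  by rewrite -subnDA (natrB _ hkl) natrD; ring.
split.
- rewrite /zc subnn poch0 mulr1.
  have e : (n - l - k = (i - k - l) + (n - i))%N by lia.
  rewrite e poch_add.
  have e2 : (n + 1 - k - l = n - k - l + 1)%N by lia.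
  rewrite e2 emR.
  rewrite (_ : al + 2 * l%:R + 1 + (i%:R - k%:R - l%:R) = al + l%:R + i%:R + 1 - k%:R); last by ring.
  set Q := poch _ (n - k - l + 1).
  case: (eqVneq Q 0) => [->|hQ]; first by rewrite mulr0 !invr0 !mulr0.
  by field; rewrite hPm hQ.
- move=> [|h] h1 h2; first by lia.
  rewrite /=.
  have hle : (h <= n)%N by lia.
  have hne : (h%:R + 1 : R) != 0 by rewrite natr1 pnatr_eq0.
  have eb0 : (h%:R + 1) * 'C(n, h.+1)%:R = (n%:R - h%:R) * 'C(n, h)%:R :> R.
    by rewrite natr1 -natrM mul_bin_left natrM natrB.
  have eb : 'C(n, h.+1)%:R = (n%:R - h%:R) * 'C(n, h)%:R / (h%:R + 1) :> R.
    by apply: (mulfI hne); rewrite eb0; field; rewrite hne.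
  rewrite /zc eb.
  have e1 : (n - l - h = (n - l - h.+1).+1)%N by lia.
  have e2 : (h.+1 - k = (h - k).+1)%N by lia.
  rewrite e1 e2 !pochS.
  have e3 : ((n - l - h.+1)%:R : R) = n%:R - l%:R - h%:R - 1.
    by rewrite -subnDA natrB ?natrD -?natr1; [ring | lia].
  have e4 : ((h - k)%:R : R) = h%:R - k%:R.
    by rewrite natrB //; lia.
  rewrite e3 e4 -natr1.
  set Q := poch _ (n + 1 - k - l).
  case: (eqVneq Q 0) => [->|hQ]; first by rewrite !mulr0 !invr0 !mulr0.
  have hlh : ((l + h.+1)%:R : R) <= n%:R by rewrite ler_nat; lia.
  rewrite natrD -natr1 in hlh.
  have hA : al + l%:R + n%:R + 1 - (h%:R + 1) != 0 by apply: lt0r_neq0; lra.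
  have h0 := ler0n R h.
  field; rewrite ?hQ /=; repeat (apply/andP; split); try (by []);
    try (by apply: lt0r_neq0; lra); by rewrite gt_eqF // poch_gt0 //; lra.
- rewrite /wc subnn hahnQE big_nat_recl // big1 ?addr0.
    by rewrite /cc !poch0 /= !mulr1 mul1r invr1.
  by move=> j _; rewrite pochSl mulr0n oppr0 !mul0r mulr0.
- move=> hk; rewrite /wc subSnn hahnQE.
  have hN : ((k + l)%:R : R) < n%:R by rewrite ltr_nat; lia.
  rewrite natrD in hN.
  case E: (i - k - l)%N => [|m].
    have ei : i = (k + l)%N by lia.
    rewrite big_nat1 /cc !poch0 /= ei natrD.
    by rewrite (_ : k%:R + l%:R - k%:R - l%:R = 0 :> R) ?mul0r ?mulr1 ?invr1 ?mul0r ?addr0 //; ring.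
  rewrite big_nat_recl // big_nat_recl // big1 ?addr0.
    rewrite /cc !poch0 !poch1 /= -E emR eNR natrD.
    have hb : be + 2 * k%:R + 1 != 0 by apply: lt0r_neq0; lra.
    rewrite (_ : 0`! = 1)%N // (_ : 1`! = 1)%N //.
    field; repeat (apply/andP; split); try (by []);
      try (by apply: lt0r_neq0; lra); try (by apply: lt0r_neq0; lra); by apply: ltr0_neq0; lra.
  by move=> j _; rewrite !pochSl mulr1n addNr !mul0r !mulr0.
- move=> [|[|h]] h1 h2; try by lia.
  rewrite /=.
  have hmN : (i - k - l <= n - k - l)%N by lia.
  have ha : -1 < be + 2 * k%:R by lra.
  have HD := @hahn_diff R _ _ (be + 2 * k%:R) (al + 2 * l%:R) ((h - k)%:R + 1) hmN ha.
  rewrite addrK in HD.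
  rewrite /wc.
  have e2 : (h.+2 - k = (h - k).+2)%N by lia.
  have e1 : (h.+1 - k = (h - k).+1)%N by lia.
  have e4 : ((h - k)%:R : R) = h%:R - k%:R by rewrite natrB //; lia.
  rewrite e1 e2 -!natr1 e4.
  rewrite -!natr1 e4 emR eNR in HD.
  move/eqP: HD; rewrite subr_eq => /eqP HD.
  have h0 := ler0n R h.
  have hlh : ((l + h.+2)%:R : R) <= n%:R by rewrite ler_nat; lia.
  rewrite natrD -!natr1 in hlh.
  have hB : (h%:R - k%:R + 1 + (be + (0 + 1 + 1) * k%:R) + 1) * (h%:R - k%:R + 1 - (n%:R - k%:R - l%:R)) != 0.
    by rewrite mulf_neq0 //; [apply: lt0r_neq0 | apply: ltr0_neq0]; lra.
  have E2 : forall u q2 q1 : R, u != 0 -> q2 = q1 + (u * (q2 - q1)) / u by move=> u q2 q1 hu; field.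
  rewrite [LHS](E2 _ _ (hahnQ (i - k - l) (h%:R - k%:R + 1) (be + (0 + 1 + 1) * k%:R)
    (al + (0 + 1 + 1) * l%:R) (n - k - l)) hB) HD.
  field; repeat (apply/andP; split); try (by []);
      try (by apply: lt0r_neq0; lra); try (by apply: ltr0_neq0; lra).
Qed.
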